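(* Let $F$ be a digraph that is $\delta^+$-maderian and has the Erdős–Pósa Property. Then for every positive integer $k$, the digraph $k\times F$ is $\delta^+$-maderian.
   Context: A subdivision of a digraph $F$ is obtained by replacing each arc $(x,y)$ by a directed $(x,y)$-path, internally disjoint with new internal vertices. A digraph $F$ is $\delta^+$-maderian if there exists an integer $c$ such that every digraph with minimum out-degree at least $c$ contains a subdivision of $F$ as a subdigraph. $k\times F$ denotes the disjoint union of $k$ copies of $F$. $F$ has the Erdős–Pósa Property if for every positive integer $k$ there exists $\phi(k)$ such that every digraph $D$ either contains a subdivision of $k\times F$, or has a vertex set $S$ with $|S|\le\phi(k)$ such that $D-S$ contains no subdivision of $F$. *)

(* Defs.v *)
From mathcomp Require Import all_boot.
Set Implicit Arguments. Unset Strict Implicit. Unset Printing Implicit Defensive.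

(* A (finite) digraph: finite vertex set, arc relation, no loops.
   Digons (x->y and y->x) allowed; no parallel arcs. *)
Record digraph := Digraph {
  dvert : finType;
  darc : rel dvert;
  darc_irr : irreflexive darc }.
Arguments darc : clear implicits.
Arguments darc_irr : clear implicits.

(* D contains a subdivision of F as a subdigraph: an injective placement f of
   the vertices of F, and for each arc (x,y) of F a list P x y of internal
   vertices forming a directed (f x, f y)-path; internal vertices are new
   (not branch vertices) and the paths are pairwise internally disjoint. *)
Definition contains_subdiv (F D : digraph) : Prop :=
  exists (f : dvert F -> dvert D) (P : dvert F -> dvert F -> seq (dvert D)),
    [/\ injective f,
        (forall x y, darc F x y ->
           [/\ path (darc D) (f x) (rcons (P x y) (f y)),
               uniq (P x y) &
               forall v, v \in P x y -> forall z, v != f z]) &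
        (forall x y x' y', darc F x y -> darc F x' y' -> (x, y) != (x', y') ->
           forall v, v \in P x y -> v \notin P x' y')].

Definition min_outdeg_ge (D : digraph) (c : nat) : Prop :=
  forall v : dvert D, c <= #|[set w | darc D v w]|.

(* delta^+-maderian (digraphs considered are non-empty, so that the minimum
   out-degree is defined) *)
Definition maderian (F : digraph) : Prop :=
  exists c : nat, forall D : digraph,
    0 < #|dvert D| -> min_outdeg_ge D c -> contains_subdiv F D.

Definition copies_arc (k : nat) (F : digraph) : rel ('I_k * dvert F)%type :=
  fun u v => (u.1 == v.1) && darc F u.2 v.2.

Lemma copies_arc_irr k F : irreflexive (@copies_arc k F).
Proof. by move=> u; rewrite /copies_arc eqxx (darc_irr F). Qed.

Definition copies (k : nat) (F : digraph) : digraph :=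
  @Digraph ('I_k * dvert F)%type (@copies_arc k F) (@copies_arc_irr k F).

Definition del_arc (D : digraph) (S : {set dvert D}) :
  rel {v : dvert D | v \notin S} := fun u v => darc D (val u) (val v).

Lemma del_arc_irr D S : irreflexive (@del_arc D S).
Proof. by move=> u; rewrite /del_arc (darc_irr D). Qed.

Definition del (D : digraph) (S : {set dvert D}) : digraph :=
  @Digraph {v : dvert D | v \notin S} (@del_arc D S) (@del_arc_irr D S).

Definition erdos_posa (F : digraph) : Prop :=
  forall k : nat, 0 < k -> exists phi : nat, forall D : digraph,
    contains_subdiv (copies k F) D \/
    exists S : {set dvert D}, #|S| <= phi /\ ~ contains_subdiv F (del S).

(* Main.v *)
Require Import Defs.
From mathcomp Require Import all_boot.
From mathcomp Require Import zify.

Lemma del_deg (D : digraph) (S : {set dvert D}) (v : dvert (del S)) :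
  #|[set w | darc D (val v) w]| - #|S| <=
  #|[set w : dvert (del S) | darc (del S) v w]|.
Proof.
set N := [set w | darc D (val v) w].
have h1 : #|N| - #|S| <= #|N :\: S|.
  rewrite cardsD; have := subset_leq_card (subsetIr N S); lia.
apply: leq_trans h1 _.
rewrite -(card_imset _ val_inj).
apply: subset_leq_card; apply/subsetP => w; rewrite !inE => /andP[wS wN].
apply/imsetP; exists (exist (fun x => x \notin S) w wS) => //.
by rewrite inE.
Qed.

Theorem theorem8 (F : digraph) :
  maderian F -> erdos_posa F -> forall k : nat, 0 < k -> maderian (copies k F).
Proof.
move=> [c Hc] EP k k0; have [phi Hphi] := EP k k0.
exists (c + phi + 1) => D D0 Hdeg.
case: (Hphi D) => // [[S [HS Hn]]]; exfalso; apply: Hn; apply: Hc.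
- have [v0 _] := card_gt0P D0.
  have := Hdeg v0.
  set N := [set w | darc D v0 w] => hN.
  have : 0 < #|N :\: S|.
    rewrite cardsD; have := subset_leq_card (subsetIr N S); lia.
  move=> /card_gt0P [w]; rewrite !inE => /andP[wS _].
  apply/card_gt0P; by exists (exist (fun x => x \notin S) w wS).
- move=> v; have := @del_deg D S v; have := Hdeg (val v); lia.
Qed.
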